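(* If $G$ is a uniformly dense (finite, simple) graph containing a cycle, then its girth satisfies $\operatorname{gir}(G)\ge\rho(G)/(\rho(G)-1)$.
   Context: For $A\subseteq E$, $c(A)$ is the number of components of $(V,A)$, $\operatorname{rank}(A)=|V|-c(A)$, $\rho(A)=|A|/\operatorname{rank}(A)$, $\rho(G)=\rho(E)$; $G$ is uniformly dense if $\rho(A)\le\rho(G)$ for all nonempty $A\subseteq E$. The girth $\operatorname{gir}(G)$ is the number of edges in a smallest cycle. *)

(* Defs.v *)
(* A finite simple graph is a symmetric irreflexive
   relation e on a finType T (vertex set V = T). *)
From mathcomp Require Import all_boot all_order all_algebra.
Set Implicit Arguments. Unset Strict Implicit. Unset Printing Implicit Defensive.
Import Order.TTheory GRing.Theory Num.Theory.

Definition edges (T : finType) (e : rel T) : {set {set T}} :=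
  [set [set p.1; p.2] | p in [set p : T * T | e p.1 p.2]].

Definition adjA (T : finType) (A : {set {set T}}) : rel T :=
  fun x y => [set x; y] \in A.

Definition ncomp (T : finType) (A : {set {set T}}) : nat :=
  n_comp (adjA A) T.

Definition grank (T : finType) (A : {set {set T}}) : nat :=
  #|T| - ncomp A.

Local Open Scope ring_scope.

Definition rho (T : finType) (A : {set {set T}}) : rat :=
  (#|A|%:R) / ((grank A)%:R).

Definition rhoG (T : finType) (e : rel T) : rat := rho (edges e).

Definition uniformly_dense (T : finType) (e : rel T) : Prop :=
  forall A : {set {set T}}, A \subset edges e -> A != set0 -> rho A <= rhoG e.

Local Close Scope ring_scope.

Definition is_graph_cycle (T : finType) (e : rel T) (c : seq T) : bool :=
  ucycleb e c && (2 < size c).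

Definition has_cycle_of_length (T : finType) (e : rel T) (k : nat) : bool :=
  [exists t : k.-tuple T, is_graph_cycle e (tval t)].

(* Girth: the least length of a cycle (cycles have at most #|T| vertices);
   equals #|T|.+1 when there is no cycle (not used in that case). *)
Definition girth (T : finType) (e : rel T) : nat :=
  find (has_cycle_of_length e) (iota 0 #|T|.+1).

(* Main.v *)
Require Import Defs.
From mathcomp Require Import all_boot all_order all_algebra.
From mathcomp Require Import lra zify.
Import Order.TTheory GRing.Theory Num.Theory.

Lemma girth_cycle (T : finType) (e : rel T)
  (h : exists c : seq T, is_graph_cycle e c) :
  exists c, is_graph_cycle e c /\ size c = girth e.
Proof.
case: h => c0 hc0.
have hhas : has (has_cycle_of_length e) (iota 0 #|T|.+1).
  apply/hasP; exists (size c0).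
    rewrite mem_iota add0n ltnS.
    move: hc0; rewrite /is_graph_cycle => /andP [/andP [_ hu] _].
    by rewrite -(card_uniqP hu) max_card.
  by apply/existsP; exists (in_tuple c0).
have := nth_find 0 hhas.
have := hhas; rewrite has_find size_iota => hlt.
rewrite nth_iota // add0n => /existsP [t ht].
by exists (tval t); rewrite size_tuple.
Qed.

Lemma next_next_neq (T : eqType) (c : seq T) x :
  uniq c -> 2 < size c -> x \in c -> next c (next c x) != x.
Proof.
move=> hu hs hx; case: (rot_to hx) => i s' hr.
rewrite -!(next_rot i hu) hr.
have : 2 < size (rot i c) by rewrite size_rot.
have : uniq (rot i c) by rewrite rot_uniq.
rewrite hr; case: s' {hr} => [|y [|z r]] //= /andP [hxn /andP [hyn _]] _.
rewrite eqxx.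
have hyx : (y == x) = false.
  by apply/negbTE; apply: contraNneq hxn => ->; rewrite inE eqxx.
rewrite hyx eqxx.
apply: contraNneq hxn => ->; by rewrite !inE eqxx orbT.
Qed.

Local Open Scope ring_scope.

Theorem proposition3p8 (T : finType) (e : rel T)
  (esym : symmetric e) (eirr : irreflexive e)
  (hud : uniformly_dense e)
  (hcyc : exists c : seq T, is_graph_cycle e c) :
  rhoG e / (rhoG e - 1) <= (girth e)%:R.
Proof.
case: (@girth_cycle T e hcyc) => c [hc hg].
move: hc; rewrite /is_graph_cycle => /andP [/andP [hcy hu] hs].
set g := girth e in hg *.
set A := [set [set x; next c x] | x in c].
have HA : A \subset edges e.
  apply/subsetP => s /imsetP [x hx ->].
  apply/imsetP; exists (x, next c x) => //.
  by rewrite inE /=; apply: next_cycle.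
have Hcard : #|A| = g.
  rewrite card_in_imset; first by rewrite (card_uniqP hu).
  move=> x y hx hy /= heq.
  case: (eqVneq x y) => // hxy.
  have h1 : x \in [set y; next c y] by rewrite -heq set21.
  have h2 : y \in [set x; next c x] by rewrite heq set21.
  move: h1 h2; rewrite !in_set2 (negbTE hxy) (eq_sym y) (negbTE hxy) /=.
  move=> /eqP h1 /eqP h2.
  by move: (@next_next_neq T c x hu hs hx); rewrite -h2 -h1 eqxx.
have Hiso : forall x y, adjA A x y -> x \in c.
  move=> x y; rewrite /adjA => /imsetP [z hz heq].
  have : x \in [set z; next c z] by rewrite -heq set21.
  by rewrite in_set2 => /orP [/eqP -> | /eqP ->] //; rewrite mem_next.
have Hsym : connect_sym (adjA A).
  apply: sym_connect_sym => x y; by rewrite /adjA setUC.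
have Hconn : forall x y, x \notin c -> connect (adjA A) x y -> y = x.
  move=> x y hx /connectP [p hp hy]; move: hp hy.
  case: p => [|z p] /=; first by [].
  by move=> /andP [/Hiso hxc _]; rewrite hxc in hx.
have Hroots : ncomp A = #|[set x | roots (adjA A) x]|.
  by rewrite /ncomp /n_comp_mem; apply: eq_card => x; rewrite !inE andbT.
case hc0 : c => [|c0 c']; first by rewrite hc0 in hs.
have c0in : c0 \in c by rewrite hc0 inE eqxx.
have Hlow : (#|T| - g + 1 <= ncomp A)%N.
  rewrite Hroots.
  set S := fingraph.root (adjA A) c0 |: [set x | x \notin c].
  have hS : S \subset [set x | roots (adjA A) x].
    apply/subsetP => x; rewrite !inE => /orP [/eqP -> | hx].
      exact: roots_root.
    by apply/eqP; apply: Hconn hx (connect_root _ _).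
  apply: leq_trans (subset_leq_card hS).
  rewrite cardsU1.
  have -> : #|[set x | x \notin c]| = (#|T| - g)%N.
    rewrite -hg -(card_uniqP hu) -(cardC (mem c)) hc0 addKn.
    by apply: eq_card => x; rewrite !inE.
  rewrite inE negbK [in X in (_ <= X)%N]addnC.
  case hr: (fingraph.root (adjA A) c0 \in c) ; first by [].
  have h1 : connect (adjA A) (fingraph.root (adjA A) c0) c0.
    by rewrite Hsym connect_root.
  by move: (Hconn _ _ (negbT hr) h1) => hh; rewrite -hh c0in in hr.
have Hup : (ncomp A < #|T|)%N.
  set c1 := next c c0.
  have he : e c0 c1 by apply: next_cycle.
  have hne : c0 != c1 by apply: contraTneq he => ->; rewrite eirr.
  have hadj : adjA A c0 c1 by rewrite /adjA; apply: imset_f.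
  have hrr : fingraph.root (adjA A) c0 = fingraph.root (adjA A) c1.
    by apply/(fingraph.rootP Hsym); apply: connect1.
  have [x0 hx0] : exists x0, ~~ roots (adjA A) x0.
    case r0 : (roots (adjA A) c0); last by exists c0; rewrite r0.
    exists c1; apply: contraNN hne => r1.
    by rewrite -(eqP r0) -(eqP r1) hrr.
  rewrite Hroots.
  have hS : [set x | roots (adjA A) x] \subset [set~ x0].
    apply/subsetP => x; rewrite !inE; apply: contraTneq => ->; exact hx0.
  apply: leq_ltn_trans (subset_leq_card hS) _.
  rewrite cardsC1; case: #|T| (max_card (mem [set x0])) => //.
  by rewrite cards1.
have hne : A != set0.
  by apply/set0Pn; exists [set c0; next c c0]; apply: imset_f.
have hrho := hud A HA hne.
move: hrho; rewrite /rho /grank.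
set rk := (#|T| - ncomp A)%N.
have hrk1 : (1 <= rk)%N by rewrite subn_gt0.
have hrkg : (rk + 1 <= g)%N.
  have hgT : (g <= #|T|)%N by rewrite -hg -(card_uniqP hu) max_card.
  rewrite /rk; lia.
have hg3 : (3 <= g)%N by move: hs; rewrite -hg hc0.
rewrite Hcard.
set r := rhoG e.
have hR : 0 < (rk%:R : rat) by rewrite ltr0n.
rewrite ler_pdivrMr // => h1.
have hRG : (rk%:R : rat) + 1 <= g%:R by move: hrkg; rewrite -(ler_nat rat) natrD.
have hG3 : 3%:R <= (g%:R : rat) by rewrite ler_nat.
have hr0 : 0 <= r by nra.
have h2 : r * rk%:R <= r * (g%:R - 1) by apply: ler_wpM2l => //; lra.
have hr1 : 0 < r - 1 by nra.
rewrite ler_pdivrMr //.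
nra.
Qed.
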